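(* For all $A,B\subseteq[n]$ the operators $\Gamma_A$ satisfy $$\{\Gamma_A,\Gamma_B\}=\Gamma_{(A\cup B)\setminus(A\cap B)}+2\,\Gamma_{A\cap B}\Gamma_{A\cup B}+2\,\Gamma_{A\setminus(A\cap B)}\Gamma_{B\setminus(A\cap B)},$$ where $\{X,Y\}=XY+YX$. (Here $\Gamma_\emptyset=-\tfrac12$ and $\Gamma_{\{k\}}=\mu_k$ are scalars.)
   Context: Fix $n\ge1$ and real parameters $\mu_1,\dots,\mu_n>0$; write $[n]=\{1,\dots,n\}$. For $i\in[n]$, $r_i$ is the reflection $(r_if)(x)=f(x_1,\dots,-x_i,\dots,x_n)$ and $T_i=\partial_{x_i}+\frac{\mu_i}{x_i}(1-r_i)$. $\mathcal{C}\ell_n$ is generated by $e_1,\dots,e_n$ with $e_ie_j+e_je_i=-2\delta_{ij}$, $V$ is a fixed left $\mathcal{C}\ell_n$-module, and operators act on $\mathcal{P}(\mathbb{R}^n)\otimes V$ with $x_i,T_i,r_i$ acting on the polynomial factor and $e_i$ on $V$. For $A\subseteq[n]$: $\underline{D}_A=\sum_{i\in A}e_iT_i$, $\underline{x}_A=\sum_{i\in A}e_ix_i$, $\underline{S}_A=\frac12([\underline{x}_A,\underline{D}_A]-1)$, $\Gamma_A=\underline{S}_A\prod_{i\in A}r_i$ (empty sums $0$, empty products $1$). *)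

(* Defs.v *)
From HB Require Import structures.
From mathcomp Require Import all_boot all_order all_algebra.
Set Implicit Arguments. Unset Strict Implicit. Unset Printing Implicit Defensive.
Import Order.TTheory GRing.Theory Num.Theory.
Local Open Scope ring_scope.

(* Elements of P(R^n) (x) V are represented by their coefficient maps:
   f : mono n -> V, f beta = V-coefficient of the monomial x^beta.
   (Finite support is imposed as a hypothesis in the theorem.) *)
Definition mono (n : nat) := 'I_n -> nat.
Definition PV (n : nat) (V : Type) := mono n -> V.

Section Ops.
Variables (R : realFieldType) (n : nat) (V : lmodType R).
Variables (mu : 'I_n -> R) (e : 'I_n -> V -> V).

Definition shift_up (i : 'I_n) (b : mono n) : mono n :=
  fun j => if j == i then (b j).+1 else b j.
Definition shift_down (i : 'I_n) (b : mono n) : mono n :=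
  fun j => if j == i then (b j).-1 else b j.

Definition padd (f g : PV n V) : PV n V := fun b => f b + g b.
Definition psub (f g : PV n V) : PV n V := fun b => f b - g b.
Definition pscale (a : R) (f : PV n V) : PV n V := fun b => a *: f b.

Definition mulx (i : 'I_n) (f : PV n V) : PV n V :=
  fun b => if (0 < b i)%N then f (shift_down i b) else 0.
Definition refl (i : 'I_n) (f : PV n V) : PV n V :=
  fun b => (-1) ^+ (b i) *: f b.
Definition pderiv (i : 'I_n) (f : PV n V) : PV n V :=
  fun b => (b i).+1%:R *: f (shift_up i b).
(* exact division by x_i (applied only to polynomials divisible by x_i) *)
Definition divx (i : 'I_n) (g : PV n V) : PV n V :=
  fun b => g (shift_up i b).
Definition dunkl (i : 'I_n) (f : PV n V) : PV n V :=
  padd (pderiv i f) (pscale (mu i) (divx i (psub f (refl i f)))).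
Definition cl (i : 'I_n) (f : PV n V) : PV n V := fun b => e i (f b).

Definition DA (A : {set 'I_n}) (f : PV n V) : PV n V :=
  fun b => \sum_(i in A) cl i (dunkl i f) b.
Definition xA (A : {set 'I_n}) (f : PV n V) : PV n V :=
  fun b => \sum_(i in A) cl i (mulx i f) b.
Definition SA (A : {set 'I_n}) (f : PV n V) : PV n V :=
  pscale (2%:R)^-1 (psub (psub (xA A (DA A f)) (DA A (xA A f))) f).
Definition reflA (A : {set 'I_n}) (f : PV n V) : PV n V :=
  foldr refl f (enum A).
Definition Gamma (A : {set 'I_n}) (f : PV n V) : PV n V := SA A (reflA A f).

End Ops.

Definition finsupp (n : nat) (V : zmodType) (f : PV n V) : Prop :=
  exists N : nat, forall b : mono n, f b != 0 -> forall j, (b j < N)%N.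

(* Main.v *)
Require Import Defs.
From HB Require Import structures.
From mathcomp Require Import all_boot all_order all_algebra.
From mathcomp Require boolp.
From mathcomp Require Import ring.
From Stdlib Require Import ProofIrrelevance FunctionalExtensionality.
Import Order.TTheory GRing.Theory Num.Theory.
Set Implicit Arguments. Unset Strict Implicit. Unset Printing Implicit Defensive.
Local Open Scope ring_scope.

Inductive lterm := LAtom of nat | LAdd of lterm & lterm | LOpp of lterm | LZero.

Fixpoint lcoef (k : nat) (t : lterm) : nat * nat :=
  match t with
  | LAtom j => if j == k then (1, 0)%N else (0, 0)%N
  | LAdd a b => ((lcoef k a).1 + (lcoef k b).1, (lcoef k a).2 + (lcoef k b).2)%N
  | LOpp a => ((lcoef k a).2, (lcoef k a).1)
  | LZero => (0, 0)%N
  end.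

Fixpoint lbnd (N : nat) (t : lterm) : bool :=
  match t with
  | LAtom j => (j < N)%N
  | LAdd a b => lbnd N a && lbnd N b
  | LOpp a => lbnd N a
  | LZero => true
  end.

Definition lcheck (N : nat) (t1 t2 : lterm) : bool :=
  [&& lbnd N t1, lbnd N t2 &
   all (fun k => (lcoef k t1).1 + (lcoef k t2).2 == (lcoef k t2).1 + (lcoef k t1).2)%N (iota 0 N)].

Section LinSolve.
Variable M : zmodType.
Variable env : seq M.

Fixpoint leval (t : lterm) : M :=
  match t with
  | LAtom k => nth 0 env k
  | LAdd a b => leval a + leval b
  | LOpp a => - leval a
  | LZero => 0
  end.

Definition zc (pq : nat * nat) : int := (pq.1)%:Z - (pq.2)%:Z.

Lemma leval_sum N t : lbnd N t ->
  leval t = \sum_(k < N) nth 0 env k *~ zc (lcoef k t).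
Proof.
elim: t => [j|a iha b ihb|a iha|] /=.
- move=> hj; rewrite (bigD1 (Ordinal hj)) //= eqxx /zc /= mulr1z big1 ?addr0 //.
  by move=> k /negbTE; rewrite -val_eqE /= eq_sym => ->; rewrite /zc /= mulr0z.
- case/andP=> ha hb; rewrite iha // ihb // -big_split /=; apply: eq_bigr => k _.
  by rewrite -mulrzDr /zc /= !PoszD opprD addrACA.
- move=> ha; rewrite iha // -sumrN; apply: eq_bigr => k _.
  by rewrite -mulrNz /zc /= opprB.
- by move=> _; rewrite big1 // => k _; rewrite /zc /= mulr0z.
Qed.

Lemma lcheck_ok N t1 t2 : lcheck N t1 t2 -> leval t1 = leval t2.
Proof.
case/and3P=> h1 h2 /allP ha; rewrite (leval_sum h1) (leval_sum h2).
apply: eq_bigr => k _; congr (_ *~ _).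
have := ha k; rewrite mem_iota add0n ltn_ord => /(_ isT) /eqP E.
rewrite /zc; apply/eqP; rewrite subr_eq addrAC eq_sym subr_eq -!PoszD.
by rewrite addnC E addnC.
Qed.
End LinSolve.

Ltac conv_test t u := constr:(ltac:(first [unify t u; exact true | exact false]) : bool).

Ltac lin_ins t l :=
  lazymatch l with
  | @nil ?T => constr:(@cons T t (@nil T))
  | @cons ?T ?u ?l' =>
    let b := conv_test t u in
    lazymatch b with
    | true => l
    | false => let l'' := lin_ins t l' in constr:(@cons T u l'')
    end
  end.

Ltac lin_atoms t l :=
  lazymatch t with
  | GRing.add ?a ?b => let l := lin_atoms a l in lin_atoms b l
  | GRing.opp ?a => lin_atoms a l
  | GRing.zero => l
  | _ => lin_ins t l
  end.

Ltac lin_idx t l :=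
  lazymatch l with
  | cons ?u ?l' =>
    let b := conv_test t u in
    lazymatch b with
    | true => constr:(0%N)
    | false => let k := lin_idx t l' in constr:(S k)
    end
  end.

Ltac lin_reify t l :=
  lazymatch t with
  | GRing.add ?a ?b => let ra := lin_reify a l in let rb := lin_reify b l in constr:(LAdd ra rb)
  | GRing.opp ?a => let ra := lin_reify a l in constr:(LOpp ra)
  | GRing.zero => constr:(LZero)
  | _ => let k := lin_idx t l in constr:(LAtom k)
  end.

Ltac lin :=
  lazymatch goal with
  | |- @eq ?T ?t1 ?t2 =>
    let l0 := constr:(@nil T) in
    let l1 := lin_atoms t1 l0 in
    let l := lin_atoms t2 l1 in
    let r1 := lin_reify t1 l in
    let r2 := lin_reify t2 l in
    change (leval l r1 = leval l r2);
    apply: (@lcheck_ok _ l (size l)); vm_compute; reflexivity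
  end.

Lemma test (Rg : pzRingType) (a b c : Rg) : a * b + (c - a*b) - (- c) = c + c.
Proof. lin. Qed.

Ltac expand := do 4 rewrite ?mulrDl ?mulrDr ?mulrBl ?mulrBr ?mulNr ?mulrN ?opprK ?opprD ?opprB ?mulrA ?mul1r ?mulr1 ?mul0r ?mulr0.

Section Abs.
Variable Rg : pzRingType.
Variable h : Rg.
Hypothesis hC : forall a, h * a = a * h.
Hypothesis hh : h + h = 1.
Definition Sf (x d : Rg) := h * (x * d - d * x - 1).

Lemma h2 a : h * a + h * a = a. Proof. by rewrite -mulrDl hh mul1r. Qed.

Lemma Ssplit x y d e : x * e = - (e * x) -> y * d = - (d * y) ->
  Sf (x+y) (d+e) = Sf x d + Sf y e + h + x * e + y * d.
Proof.
move=> E1 E2.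
have E1' : e * x = - (x * e) by rewrite E1 opprK.
have E2' : d * y = - (y * d) by rewrite E2 opprK.
transitivity (Sf x d + Sf y e + h + (h*(x*e)+h*(x*e)) + (h*(y*d)+h*(y*d))); last by rewrite !h2.
rewrite /Sf; expand; rewrite -[h*e*x]mulrA -[h*d*y]mulrA E1' E2'; expand; lin.
Qed.

End Abs.

Section Tk.
Variable Rg : pzRingType.
Implicit Types (y z a b m r c x d : Rg).
Definition cm (y z : Rg) := y * z = z * y.
Definition am (y z : Rg) := y * z = - (z * y).
Lemma cmM y a b : cm y a -> cm y b -> cm y (a * b).
Proof. by rewrite /cm => ha hb; rewrite mulrA ha -mulrA hb mulrA. Qed.
Lemma cmMa y a b : am y a -> am y b -> cm y (a * b).
Proof. by rewrite /cm /am => ha hb; rewrite mulrA ha mulNr -mulrA hb mulrN opprK mulrA. Qed.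
Lemma amM1 y a b : am y a -> cm y b -> am y (a * b).
Proof. by rewrite /cm /am => ha hb; rewrite mulrA ha mulNr -mulrA hb mulrA. Qed.
Lemma amM2 y a b : cm y a -> am y b -> am y (a * b).
Proof. by rewrite /cm /am => ha hb; rewrite mulrA ha -mulrA hb mulrN mulrA. Qed.
Lemma cmD y a b : cm y a -> cm y b -> cm y (a + b).
Proof. by rewrite /cm => ha hb; rewrite mulrDr mulrDl ha hb. Qed.
Lemma amD y a b : am y a -> am y b -> am y (a + b).
Proof. by rewrite /am => ha hb; rewrite mulrDr mulrDl ha hb opprD. Qed.
Lemma cmN y a : cm y a -> cm y (- a).
Proof. by rewrite /cm => ha; rewrite mulrN mulNr ha. Qed.
Lemma amN y a : am y a -> am y (- a).
Proof. by rewrite /am => ha; rewrite mulrN mulNr ha. Qed.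
Lemma cmB y a b : cm y a -> cm y b -> cm y (a - b).
Proof. by move=> ha hb; apply: cmD => //; apply: cmN. Qed.
Lemma amB y a b : am y a -> am y b -> am y (a - b).
Proof. by move=> ha hb; apply: amD => //; apply: amN. Qed.
Lemma cm1 y : cm y 1. Proof. by rewrite /cm mulr1 mul1r. Qed.
Lemma cmxx y : cm y y. Proof. by []. Qed.
Lemma cmS y z : cm y z -> cm z y. Proof. by rewrite /cm. Qed.
Lemma amS y z : am y z -> am z y. Proof. by rewrite /am => ->; rewrite opprK. Qed.
Lemma cmMl (y1 y2 : Rg) a : cm y1 a -> cm y2 a -> cm (y1 * y2) a.
Proof. by move=> h1 h2; apply/cmS/cmM; apply/cmS. Qed.
Lemma cmMla (y1 y2 : Rg) a : am y1 a -> am y2 a -> cm (y1 * y2) a.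
Proof. by move=> h1 h2; apply/cmS/cmMa; apply/amS. Qed.
Lemma amMl1 (y1 y2 : Rg) a : am y1 a -> cm y2 a -> am (y1 * y2) a.
Proof. by move=> h1 h2; apply/amS/amM1; [apply/amS|apply/cmS]. Qed.
Lemma amMl2 (y1 y2 : Rg) a : cm y1 a -> am y2 a -> am (y1 * y2) a.
Proof. by move=> h1 h2; apply/amS/amM2; [apply/cmS|apply/amS]. Qed.
Lemma cmDl (y1 y2 : Rg) a : cm y1 a -> cm y2 a -> cm (y1 + y2) a.
Proof. by move=> h1 h2; apply/cmS/cmD; apply/cmS. Qed.
Lemma amDl (y1 y2 : Rg) a : am y1 a -> am y2 a -> am (y1 + y2) a.
Proof. by move=> h1 h2; apply/amS/amD; apply/amS. Qed.
Lemma cm_sign r y z : cm r y -> am r z -> r * (y + z) = (y - z) * r.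
Proof. by rewrite /cm /am => h1 h2; rewrite mulrDr h1 h2 mulrBl. Qed.
Lemma swA m a b : am a b -> m * a * b = - (m * b * a).
Proof. by rewrite /am => H; rewrite -mulrA H mulrN mulrA. Qed.
Lemma swC m a b : cm a b -> m * a * b = m * b * a.
Proof. by rewrite /cm => H; rewrite -mulrA H mulrA. Qed.
Lemma subM m a b c : a * b = c -> m * a * b = m * c.
Proof. by move=> H; rewrite -mulrA H. Qed.
End Tk.

Section Abs2.
Variable Rg : pzRingType.
Implicit Types (y z a b m r c x d : Rg).
Variable h : Rg.
Hypothesis hC : forall a, h * a = a * h.
Hypothesis hh : h + h = 1.
Local Notation S := (Sf h).

Lemma cmh y : cm h y. Proof. exact: hC. Qed.

Lemma Sc y x d : am y x -> am y d -> cm y (S x d).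
Proof.
move=> hx hd; rewrite /Sf; apply: cmM; first by apply/cmS/cmh.
by apply: cmB; [apply: cmB; [apply: cmMa|apply: cmMa]|apply: cm1].
Qed.
Lemma Sc' y x d : cm y x -> cm y d -> cm y (S x d).
Proof.
move=> hx hd; rewrite /Sf; apply: cmM; first by apply/cmS/cmh.
by apply: cmB; [apply: cmB; [apply: cmM|apply: cmM]|apply: cm1].
Qed.

Lemma Sax x d : x*x*d - d*x*x = x + x -> am x (S x d).
Proof.
move=> H; have E : x*x*d = d*x*x + (x + x) by rewrite -H addrC subrK.
rewrite /am /Sf; set Z := (_ - _ - 1); rewrite mulrA -hC -!mulrA.
suff K : x * Z = - (Z * x) by rewrite K mulrN.
apply/eqP; rewrite -addr_eq0 /Z; expand; rewrite E; apply/eqP; lin.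
Qed.
Lemma Sad x d : x*d*d - d*d*x = d + d -> am d (S x d).
Proof.
move=> H; have E : x*d*d = d*d*x + (d + d) by rewrite -H addrC subrK.
rewrite /am /Sf; set Z := (_ - _ - 1); rewrite mulrA -hC -!mulrA.
suff K : d * Z = - (Z * d) by rewrite K mulrN.
apply/eqP; rewrite -addr_eq0 /Z; expand; rewrite E; apply/eqP; lin.
Qed.
End Abs2.

Lemma L1 (Rg : pzRingType) (a U b W : Rg) :
  (a+U)*(b-W) + (b+W)*(a-U) = (a*b + b*a) + (U*b - b*U) + (W*a - a*W) - (U*W + W*U).
Proof. expand; lin. Qed.

Lemma FIN (Rg : pzRingType) (X Y Z W1 W2 r : Rg) : X + Y = Z + 2%:R * W1 + 2%:R * W2 ->
  X*r + Y*r = Z*r + 2%:R*(W1*r) + 2%:R*(W2*r).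
Proof. by move=> H; rewrite -mulrDl H !mulrDl !mulrA. Qed.

Lemma comB1 (Rg : pzRingType) (U y1 y2 y3 : Rg) : am y1 U -> cm y2 U -> cm y3 U ->
  U*(y1+y2+y3) - (y1+y2+y3)*U = -(y1*U + y1*U).
Proof. rewrite /am /cm => h1 h2 h3; expand; rewrite -h2 -h3 (amS h1); lin. Qed.
Lemma comB2 (Rg : pzRingType) (U y1 y2 y3 : Rg) : cm y1 U -> am y2 U -> cm y3 U ->
  U*(y1+y2+y3) - (y1+y2+y3)*U = -(y2*U + y2*U).
Proof. rewrite /am /cm => h1 h2 h3; expand; rewrite -h1 -h3 (amS h2); lin. Qed.
Lemma P7g (Rg : pzRingType) (s A V U W : Rg) : s*((A+V)-(U+W)) = s*A - s*U + s*V - s*W.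
Proof. expand; lin. Qed.


Section Main.
Variable Rg : pzRingType.
Variable h : Rg.
Hypothesis hC : forall a, h * a = a * h.
Hypothesis hh : h + h = 1.
Local Notation S := (Sf h).
Variables x1 x2 x3 d1 d2 d3 r1 r2 r3 : Rg.
Hypotheses (rr1 : r1*r1 = 1) (rr2 : r2*r2 = 1) (rr3 : r3*r3 = 1)
  (c12 : cm r1 r2) (c13 : cm r1 r3) (c23 : cm r2 r3)
  (a1x : am r1 x1) (a1d : am r1 d1) (a2x : am r2 x2) (a2d : am r2 d2) (a3x : am r3 x3) (a3d : am r3 d3)
  (c1x2 : cm r1 x2) (c1d2 : cm r1 d2) (c1x3 : cm r1 x3) (c1d3 : cm r1 d3)
  (c2x1 : cm r2 x1) (c2d1 : cm r2 d1) (c2x3 : cm r2 x3) (c2d3 : cm r2 d3)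
  (c3x1 : cm r3 x1) (c3d1 : cm r3 d1) (c3x2 : cm r3 x2) (c3d2 : cm r3 d2)
  (axx12 : am x1 x2) (axx13 : am x1 x3) (axx23 : am x2 x3)
  (add12 : am d1 d2) (add13 : am d1 d3) (add23 : am d2 d3)
  (axd12 : am x1 d2) (axd13 : am x1 d3) (axd21 : am x2 d1) (axd23 : am x2 d3)
  (axd31 : am x3 d1) (axd32 : am x3 d2)
  (o1x : x1*x1*d1 - d1*x1*x1 = x1 + x1) (o1d : x1*d1*d1 - d1*d1*x1 = d1 + d1)
  (o2x : x2*x2*d2 - d2*x2*x2 = x2 + x2) (o2d : x2*d2*d2 - d2*d2*x2 = d2 + d2)
  (o3x : x3*x3*d3 - d3*x3*x3 = x3 + x3) (o3d : x3*d3*d3 - d3*d3*x3 = d3 + d3).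

Let G x d r := S x d * r.

Lemma P5 : (x1*d2 + x2*d1)*(x2*d3 + x3*d2) + (x2*d3 + x3*d2)*(x1*d2 + x2*d1) =
  - ((S x2 d2 * (x1*d3 + x3*d1) + S x2 d2 * (x1*d3 + x3*d1)) + (x1*d3 + x3*d1)).
Proof.
set s2 := S x2 d2.
have D2X2 : d2*x2 = x2*d2 - 1 - (s2 + s2).
  by rewrite /s2 (h2 hh); lin.
have x1s2 : x1 * s2 = s2 * x1 by exact: (Sc hC axx12 axd12).
have x3s2 : x3 * s2 = s2 * x3 by exact: (Sc hC (amS axx23) axd32).
have d1s2 : d1 * s2 = s2 * d1 by exact: (Sc hC (amS axd21) add12).
have d3s2 : d3 * s2 = s2 * d3 by exact: (Sc hC (amS axd23) (amS add23)).
clearbody s2.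
have R1 : d2*x1 = - (x1*d2) by rewrite axd12 opprK.
have R2 : d3*x1 = - (x1*d3) by rewrite axd13 opprK.
have R3 : d1*x2 = - (x2*d1) by rewrite axd21 opprK.
have R4 : d3*x2 = - (x2*d3) by rewrite axd23 opprK.
have R5 : d1*x3 = - (x3*d1) by rewrite axd31 opprK.
have R6 : d2*x3 = - (x3*d2) by rewrite axd32 opprK.
have R7 : x2*x1 = - (x1*x2) by rewrite axx12 opprK.
have R8 : x3*x1 = - (x1*x3) by rewrite axx13 opprK.
have R9 : x3*x2 = - (x2*x3) by rewrite axx23 opprK.
have R10 : d2*d1 = - (d1*d2) by rewrite add12 opprK.
have R11 : d3*d1 = - (d1*d3) by rewrite add13 opprK.
have R12 : d3*d2 = - (d2*d3) by rewrite add23 opprK.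
expand.
do 6 (rewrite ?(subM _ D2X2) ?D2X2 ?(subM _ R1) ?R1 ?(subM _ R2) ?R2 ?(subM _ R3) ?R3
  ?(subM _ R4) ?R4 ?(subM _ R5) ?R5 ?(subM _ R6) ?R6 ?(subM _ R7) ?R7 ?(subM _ R8) ?R8
  ?(subM _ R9) ?R9 ?(subM _ R10) ?R10 ?(subM _ R11) ?R11 ?(subM _ R12) ?R12
  ?(subM _ x1s2) ?x1s2 ?(subM _ x3s2) ?x3s2 ?(subM _ d1s2) ?d1s2 ?(subM _ d3s2) ?d3s2; expand).
lin.
Qed.

Lemma T1 A U B W : r1*r2*(B+W) = (B-W)*(r1*r2) ->
  (A+U)*(r1*r2)*((B+W)*(r2*r3)) = (A+U)*(B-W)*(r1*r3).
Proof.
move=> E; rewrite mulrA -[(A+U)*(r1*r2)*(B+W)]mulrA E !mulrA.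
by rewrite -[_ * r2 * r2]mulrA rr2 mulr1.
Qed.
Lemma T2 A U B W : r2*r3*(A+U) = (A-U)*(r2*r3) ->
  (B+W)*(r2*r3)*((A+U)*(r1*r2)) = (B+W)*(A-U)*(r1*r3).
Proof.
move=> E; rewrite mulrA -[(B+W)*(r2*r3)*(A+U)]mulrA E !mulrA.
rewrite (swC _ (cmS c13)) (swC _ (cmS c23)) (swC _ (cmS c12)).
by rewrite -[_ * r2 * r2]mulrA rr2 mulr1.
Qed.
Lemma T3 s P Q : r2*(P+Q) = (P-Q)*r2 ->
  s*r2*((P+Q)*(r1*r2*r3)) = s*(P-Q)*(r1*r3).
Proof.
move=> E; rewrite mulrA -[s*r2*(P+Q)]mulrA E !mulrA.
rewrite (swC _ (cmS c12)).
by rewrite -[_ * r2 * r2]mulrA rr2 mulr1.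
Qed.
Lemma T4 s t : cm r1 t -> s*r1*(t*r3) = s*t*(r1*r3).
Proof. by move=> E; rewrite !mulrA (swC _ E). Qed.

Lemma P6g p q t : cm p q ->
  (p+q+h)*(q+t+h) + (p+q+h)*(q+t+h) =
  (p+t+h) + (q*((p+q+h)+t+h) + q*((p+q+h)+t+h)) + (p*t + p*t).
Proof.
move=> Hpq.
have Ep : p = p*h + p*h by rewrite -mulrDr hh mulr1.
have Et : t = t*h + t*h by rewrite -mulrDr hh mulr1.
have Eh : h = h*h + h*h by rewrite -mulrDr hh mulr1.
transitivity ((p*h+p*h) + (t*h+t*h) + (h*h+h*h) + (q*((p+q+h)+t+h) + q*((p+q+h)+t+h)) + (p*t + p*t));
  last by rewrite -Ep -Et -Eh.
expand; rewrite (hC q) (hC t) -Hpq; lin.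
Qed.

Ltac ctac := solve [ assumption | apply: cmS; assumption | apply: amS; assumption | exact: cmxx
 | exact: (cmh hC _) | apply: cmS; exact: (cmh hC _)
 | apply: cmD; ctac | apply: amD; ctac | apply: cmB; ctac | apply: amB; ctac
 | apply: cmDl; ctac | apply: amDl; ctac
 | apply: cmM; ctac | apply: cmMa; ctac | apply: amM1; ctac | apply: amM2; ctac
 | apply: cmMl; ctac | apply: cmMla; ctac | apply: amMl1; ctac | apply: amMl2; ctac ].

Lemma main_abs :
  G (x1+x2) (d1+d2) (r1*r2) * G (x2+x3) (d2+d3) (r2*r3)
  + G (x2+x3) (d2+d3) (r2*r3) * G (x1+x2) (d1+d2) (r1*r2)
  = G (x1+x3) (d1+d3) (r1*r3)
  + 2%:R * (G x2 d2 r2 * G (x1+x2+x3) (d1+d2+d3) (r1*r2*r3))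
  + 2%:R * (G x1 d1 r1 * G x3 d3 r3).
Proof.
rewrite /G.
have HA : S (x1+x2) (d1+d2) = (S x1 d1 + S x2 d2 + h) + (x1*d2 + x2*d1)
  by rewrite (Ssplit hh axd12 axd21); lin.
have HB : S (x2+x3) (d2+d3) = (S x2 d2 + S x3 d3 + h) + (x2*d3 + x3*d2)
  by rewrite (Ssplit hh axd23 axd32); lin.
have HC : S (x1+x3) (d1+d3) = (S x1 d1 + S x3 d3 + h) + (x1*d3 + x3*d1)
  by rewrite (Ssplit hh axd13 axd31); lin.
have HD : S (x1+x2+x3) (d1+d2+d3) = (((S x1 d1 + S x2 d2 + h) + S x3 d3 + h) + (x1*d3 + x3*d1))
   + ((x1*d2 + x2*d1) + (x2*d3 + x3*d2))
  by rewrite (Ssplit hh (amDl axd13 axd23) (amD axd31 axd32)) HA; expand; lin.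
rewrite HD HA HB HC.
have E5 := P5.
have ax1 := Sax hC o1x. have ad1 := Sad hC o1d.
have ax2 := Sax hC o2x. have ad2 := Sad hC o2d.
have ax3 := Sax hC o3x. have ad3 := Sad hC o3d.
have cx2s1 := Sc hC (amS axx12) axd21. have cd2s1 := Sc hC (amS axd12) (amS add12).
have cx3s1 := Sc hC (amS axx13) axd31. have cd3s1 := Sc hC (amS axd13) (amS add13).
have cx1s2 := Sc hC axx12 axd12. have cd1s2 := Sc hC (amS axd21) add12.
have cx3s2 := Sc hC (amS axx23) axd32. have cd3s2 := Sc hC (amS axd23) (amS add23).
have cx1s3 := Sc hC axx13 axd13. have cd1s3 := Sc hC (amS axd31) add13.
have cx2s3 := Sc hC axx23 axd23. have cd2s3 := Sc hC (amS axd32) add23.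
have cr1s1 := Sc hC a1x a1d. have cr2s2 := Sc hC a2x a2d. have cr3s3 := Sc hC a3x a3d.
have cr1s2 := Sc' hC c1x2 c1d2. have cr1s3 := Sc' hC c1x3 c1d3.
have cr2s1 := Sc' hC c2x1 c2d1. have cr2s3 := Sc' hC c2x3 c2d3.
have cr3s1 := Sc' hC c3x1 c3d1. have cr3s2 := Sc' hC c3x2 c3d2.
have cs12 := Sc' hC (cmS cx2s1) (cmS cd2s1).
have cs13 := Sc' hC (cmS cx3s1) (cmS cd3s1).
have cs23 := Sc' hC (cmS cx3s2) (cmS cd3s2).
move: E5 ax1 ad1 ax2 ad2 ax3 ad3 cx2s1 cd2s1 cx3s1 cd3s1 cx1s2 cd1s2 cx3s2 cd3s2 cx1s3 cd1s3 cx2s3 cd2s3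
  cr1s1 cr2s2 cr3s3 cr1s2 cr1s3 cr2s1 cr2s3 cr3s1 cr3s2 cs12 cs13 cs23.
move: (S x1 d1) (S x2 d2) (S x3 d3) => s1 s2 s3.
move=> E5 ax1 ad1 ax2 ad2 ax3 ad3 cx2s1 cd2s1 cx3s1 cd3s1 cx1s2 cd1s2 cx3s2 cd3s2 cx1s3 cd1s3 cx2s3 cd2s3
  cr1s1 cr2s2 cr3s3 cr1s2 cr1s3 cr2s1 cr2s3 cr3s1 cr3s2 cs12 cs13 cs23.
have E1 : r1*r2*((s2+s3+h) + (x2*d3+x3*d2)) = ((s2+s3+h) - (x2*d3+x3*d2))*(r1*r2)
  by apply: cm_sign; ctac.
have E2 : r2*r3*((s1+s2+h) + (x1*d2+x2*d1)) = ((s1+s2+h) - (x1*d2+x2*d1))*(r2*r3)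
  by apply: cm_sign; ctac.
have E3 : r2*((((s1+s2+h)+s3+h)+(x1*d3+x3*d1)) + ((x1*d2+x2*d1)+(x2*d3+x3*d2)))
   = ((((s1+s2+h)+s3+h)+(x1*d3+x3*d1)) - ((x1*d2+x2*d1)+(x2*d3+x3*d2))) * r2
  by apply: cm_sign; ctac.
rewrite (T1 _ _ E1) (T2 _ _ E2) (T3 _ E3) (T4 _ cr1s3).
apply: FIN.
rewrite L1.
have cBA : (s2+s3+h)*(s1+s2+h) = (s1+s2+h)*(s2+s3+h) by ctac.
rewrite cBA (comB1 (y1:=s2)); try ctac.
rewrite (comB2 (y1:=s1)); try ctac.
rewrite E5 !mulr_natl !mulr2n P7g P6g //.
lin.
Qed.

End Main.


Section OpRing.
Variables (R : realFieldType) (n : nat) (V : lmodType R).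

Record aop := AOp { app :> PV n V -> PV n V ;
  appD : forall f g, app (padd f g) = padd (app f) (app g) }.

Lemma aop_ext (a b : aop) : (forall f x, a f x = b f x) -> a = b.
Proof.
case: a b => fa ha [fb hb] /= H.
have E : fa = fb by apply: functional_extensionality => f; apply: functional_extensionality => x; exact: H.
subst fb; congr AOp; exact: proof_irrelevance.
Qed.

HB.instance Definition _ := boolp.gen_eqMixin aop.
HB.instance Definition _ := boolp.gen_choiceMixin aop.

Program Definition azero : aop := @AOp (fun f x => 0) _.
Next Obligation. by apply: functional_extensionality => x; rewrite /padd addr0. Qed.
Program Definition aopp (a : aop) : aop := @AOp (fun f x => - a f x) _.
Next Obligation. by apply: functional_extensionality => x; rewrite appD /padd opprD. Qed.
Program Definition aadd (a b : aop) : aop := @AOp (fun f x => a f x + b f x) _.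
Next Obligation. by apply: functional_extensionality => x; rewrite !appD /padd addrACA. Qed.
Program Definition aone : aop := @AOp (fun f => f) _.
Program Definition amul (a b : aop) : aop := @AOp (fun f => a (b f)) _.
Next Obligation. by rewrite !appD. Qed.

Lemma aaddA : associative aadd. Proof. by move=> a b c; apply: aop_ext => f x /=; rewrite addrA. Qed.
Lemma aaddC : commutative aadd. Proof. by move=> a b; apply: aop_ext => f x /=; rewrite addrC. Qed.
Lemma aadd0 : left_id azero aadd. Proof. by move=> a; apply: aop_ext => f x /=; rewrite add0r. Qed.
Lemma aaddN : left_inverse azero aopp aadd. Proof. by move=> a; apply: aop_ext => f x /=; rewrite addNr. Qed.
HB.instance Definition _ := GRing.isZmodule.Build aop aaddA aaddC aadd0 aaddN.

Lemma amulA : associative amul. Proof. by move=> a b c; apply: aop_ext. Qed.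
Lemma amul1 : left_id aone amul. Proof. by move=> a; apply: aop_ext. Qed.
Lemma amulr1 : right_id aone amul. Proof. by move=> a; apply: aop_ext. Qed.
Lemma amulDl : left_distributive amul +%R. Proof. by move=> a b c; apply: aop_ext. Qed.
Lemma amulDr : right_distributive amul +%R.
Proof. by move=> a b c; apply: aop_ext => f x /=; rewrite appD. Qed.
HB.instance Definition _ := GRing.Zmodule_isPzRing.Build aop amulA amul1 amulr1 amulDl amulDr.

Lemma addE (a b : aop) f x : (a + b) f x = a f x + b f x. Proof. by []. Qed.
Lemma mulE (a b : aop) f : (a * b) f = a (b f). Proof. by []. Qed.
End OpRing.


Lemma big_disjU (T : Type) (idx : T) (op : Monoid.com_law idx) (n : nat) (A B : {set 'I_n}) (F : 'I_n -> T) :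
  [disjoint A & B] -> \big[op/idx]_(i in A :|: B) F i = op (\big[op/idx]_(i in A) F i) (\big[op/idx]_(i in B) F i).
Proof. by move=> d; rewrite -bigU //; apply: eq_bigl => i; rewrite !inE. Qed.

Section Conc.
Variables (R : realFieldType) (n : nat) (V : lmodType R) (mu : 'I_n -> R) (e : 'I_n -> V -> V).
Hypothesis he_lin : forall i (a : R) (u v : V), e i (a *: u + v) = a *: e i u + e i v.
Hypothesis he_cl : forall i j (v : V), e i (e j v) + e j (e i v) = - ((2 * (i == j)%:R) *: v).
Local Notation Op := (@aop R n V).
Local Notation PVT := (PV n V).
Implicit Types (i j : 'I_n) (b : mono n) (f g : PVT) (X Y : {set 'I_n}).

Lemma e0 i : e i 0 = 0.
Proof.
have := he_lin i 1 0 0; rewrite !scale1r addr0 => H.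
by apply: (@addrI _ (e i 0)); rewrite addr0 -H.
Qed.
Lemma eD i u v : e i (u + v) = e i u + e i v.
Proof. by have := he_lin i 1 u v; rewrite !scale1r. Qed.
Lemma eZ i a u : e i (a *: u) = a *: e i u.
Proof. by have := he_lin i a u 0; rewrite !addr0 e0 addr0. Qed.
Lemma eN i u : e i (- u) = - e i u.
Proof. by rewrite -scaleN1r eZ scaleN1r. Qed.
Lemma esq i v : e i (e i v) = - v.
Proof.
have := he_cl i i v; rewrite eqxx mulr1 => H.
have : (2%:R : R) *: e i (e i v) = 2%:R *: (-v) by rewrite scaler_nat mulr2n H scalerN.
by move/(congr1 (fun z => (2%:R : R)^-1 *: z)); rewrite !scalerA mulVf ?pnatr_eq0 // !scale1r.
Qed.
Lemma eanti i j v : i != j -> e i (e j v) = - e j (e i v).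
Proof.
move=> /negbTE ij; have := he_cl i j v; rewrite ij mulr0 scale0r oppr0 => /eqP.
by rewrite addr_eq0 => /eqP.
Qed.

Lemma up_ne i j b : j != i -> shift_up i b j = b j.
Proof. by rewrite /shift_up => /negbTE ->. Qed.
Lemma up_eq i b : shift_up i b i = (b i).+1.
Proof. by rewrite /shift_up eqxx. Qed.
Lemma down_ne i j b : j != i -> shift_down i b j = b j.
Proof. by rewrite /shift_down => /negbTE ->. Qed.
Lemma down_eq i b : shift_down i b i = (b i).-1.
Proof. by rewrite /shift_down eqxx. Qed.
Lemma down_up i b : shift_down i (shift_up i b) = b.
Proof.
apply: functional_extensionality => j; rewrite /shift_down /shift_up.
by case: eqP => // ->.
Qed.
Lemma up_down i b : (0 < b i)%N -> shift_up i (shift_down i b) = b.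
Proof.
move=> hb; apply: functional_extensionality => j; rewrite /shift_down /shift_up.
by case: eqP => // ->; rewrite prednK.
Qed.
Lemma up_up i j b : shift_up i (shift_up j b) = shift_up j (shift_up i b).
Proof.
apply: functional_extensionality => k; rewrite /shift_up.
by case: eqP => [->|]; case: eqP => // ->.
Qed.
Lemma down_down i j b : shift_down i (shift_down j b) = shift_down j (shift_down i b).
Proof.
apply: functional_extensionality => k; rewrite /shift_down.
by case: eqP => [->|]; case: eqP => // ->.
Qed.
Lemma up_down_ne i j b : i != j -> shift_up i (shift_down j b) = shift_down j (shift_up i b).
Proof.
move=> ij; apply: functional_extensionality => k; rewrite /shift_down /shift_up.
case: (k =P i) => [ki|ki]; case: (k =P j) => [kj|kj] //.
by move: ij; rewrite -ki -kj eqxx.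
Qed.

Definition cf i (b : mono n) : R := (b i).+1%:R + mu i * (1 - (-1) ^+ (b i).+1).
Lemma dunklE i f b : dunkl mu i f b = cf i b *: f (shift_up i b).
Proof.
rewrite /dunkl /padd /pderiv /pscale /divx /psub /refl up_eq /cf.
by rewrite scalerDl -scalerA scalerBl scale1r.
Qed.
Lemma cf_ne i j b : j != i -> cf i (shift_up j b) = cf i b.
Proof. by move=> ji; rewrite /cf up_ne // eq_sym. Qed.
Lemma cf_dne i j b : j != i -> cf i (shift_down j b) = cf i b.
Proof. by move=> ji; rewrite /cf down_ne // eq_sym. Qed.

Definition cfv i (k : nat) : R := k.+1%:R + mu i * (1 - (-1) ^+ k.+1).
Lemma cfE i b : cf i b = cfv i (b i). Proof. by []. Qed.
Lemma cfv_step i k : cfv i k.+2 - cfv i k = 2%:R.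
Proof. rewrite /cfv !exprS; ring. Qed.
Lemma cfv1 i : cfv i 1 = 2%:R.
Proof. rewrite /cfv !exprS expr0; ring. Qed.

Lemma cl_add i f g : cl e i (padd f g) = padd (cl e i f) (cl e i g).
Proof. by apply: functional_extensionality => b; rewrite /cl /padd eD. Qed.
Lemma mulx_add i f g : mulx i (padd f g) = padd (mulx i f) (mulx i g).
Proof. by apply: functional_extensionality => b; rewrite /mulx /padd; case: ifP; rewrite ?addr0. Qed.
Lemma dunkl_add i f g : dunkl mu i (padd f g) = padd (dunkl mu i f) (dunkl mu i g).
Proof. by apply: functional_extensionality => b; rewrite /padd !dunklE /padd scalerDr. Qed.

Definition rho (X : {set 'I_n}) b : R := \prod_(j in X) (-1) ^+ (b j).
Lemma foldr_refl (s : seq 'I_n) f b : foldr (refl (V:=V)) f s b = (\prod_(j <- s) (-1) ^+ (b j)) *: f b.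
Proof.
elim: s => [|j s IH] /=; first by rewrite big_nil scale1r.
by rewrite /refl IH big_cons scalerA.
Qed.
Lemma reflAE X f b : reflA X f b = rho X b *: f b.
Proof. by rewrite /reflA foldr_refl big_enum. Qed.
Lemma reflA_add X f g : reflA X (padd f g) = padd (reflA X f) (reflA X g).
Proof. by apply: functional_extensionality => b; rewrite /padd !reflAE /padd scalerDr. Qed.
Lemma half_add f g : pscale 2%:R^-1 (padd f g) = padd (pscale 2%:R^-1 f) (pscale 2%:R^-1 g).
Proof. by apply: functional_extensionality => b; rewrite /padd /pscale scalerDr. Qed.

Definition Ec i : Op := AOp (cl_add i).
Definition Mx i : Op := AOp (mulx_add i).
Definition Dk i : Op := AOp (dunkl_add i).
Definition Rr X : Op := AOp (reflA_add X).
Definition hop : Op := AOp half_add.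

Lemma two_half : (2%:R : R)^-1 + 2%:R^-1 = 1.
Proof. by field. Qed.

Lemma hopC (a : Op) : hop * a = a * hop.
Proof.
apply: aop_ext => f b /=.
have Ef : f = padd (pscale 2%:R^-1 f) (pscale 2%:R^-1 f).
  by apply: functional_extensionality => c; rewrite /padd /pscale -scalerDl two_half scale1r.
rewrite {1}Ef appD /padd {1}/pscale -mulr2n -scaler_nat scalerA mulVf ?pnatr_eq0 // scale1r.
by [].
Qed.
Lemma hophop : hop + hop = 1.
Proof. by apply: aop_ext => f b /=; rewrite /pscale -scalerDl two_half scale1r. Qed.

Lemma cmEM i j : cm (Ec i) (Mx j).
Proof. by apply: aop_ext => f b /=; rewrite /cl /mulx; case: ifP; rewrite ?e0. Qed.
Lemma cmED i j : cm (Ec i) (Dk j).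
Proof. by apply: aop_ext => f b /=; rewrite /cl !dunklE eZ. Qed.
Lemma amEE i j : i != j -> am (Ec i) (Ec j).
Proof. by move=> ij; apply: aop_ext => f b /=; rewrite /cl eanti. Qed.
Lemma EEsq i : Ec i * Ec i = -1.
Proof. by apply: aop_ext => f b /=; rewrite /cl esq. Qed.
Lemma cmMD i j : i != j -> cm (Mx i) (Dk j).
Proof.
move=> ij; apply: aop_ext => f b /=; rewrite /mulx !dunklE /mulx up_ne //.
case: ifP => _; last by rewrite scaler0.
by rewrite cf_dne // up_down_ne // eq_sym.
Qed.
Lemma cmMM i j : cm (Mx i) (Mx j).
Proof.
case: (eqVneq i j) => [->|ij]; first by [].
apply: aop_ext => f b /=; rewrite /mulx down_ne 1?eq_sym // down_ne //.
by case: ifP; case: ifP; rewrite // down_down.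
Qed.
Lemma cmDD i j : cm (Dk i) (Dk j).
Proof.
case: (eqVneq i j) => [->|ij]; first by [].
apply: aop_ext => f b /=; rewrite !dunklE scalerA cf_ne // cf_ne 1?eq_sym //.
by rewrite scalerA mulrC up_up.
Qed.
Lemma oMx i : Dk i * Mx i * Mx i - Mx i * Mx i * Dk i = Mx i + Mx i.
Proof.
apply: aop_ext => f b /=; rewrite !dunklE /mulx up_eq /= down_up down_eq.
case E: (b i) => [|[|k]] /=; first by rewrite !scaler0 subr0 addr0.
  by rewrite cfE E cfv1 scaler_nat mulr2n subr0.
rewrite dunklE up_down ?down_eq ?E // cfE E cfE down_eq down_eq E /=.
by rewrite -scalerBl cfv_step scaler_nat mulr2n.
Qed.
Lemma oDk i : Dk i * Dk i * Mx i - Mx i * Dk i * Dk i = Dk i + Dk i.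
Proof.
apply: aop_ext => f b /=; rewrite !dunklE /mulx up_eq /= down_up.
case E: (b i) => [|k] /=.
  by rewrite subr0 (cfE i (shift_up i b)) up_eq E cfv1 scaler_nat mulr2n scalerDr.
rewrite dunklE up_down ?E // dunklE !scalerA -scalerBl -scalerDl; congr (_ *: _).
rewrite (cfE i (shift_up i b)) (cfE i (shift_down i b)) up_eq down_eq E /=.
have -> : cfv i k.+2 = cfv i k + 2%:R by rewrite -(cfv_step i k) addrC subrK.
ring.
Qed.
Definition sgn X i : R := if i \in X then -1 else 1.
Lemma rho_up X i b : rho X (shift_up i b) = sgn X i * rho X b.
Proof.
rewrite /rho /sgn; case: (boolP (i \in X)) => iX.
  rewrite (bigD1 i iX) [in RHS](bigD1 i iX) /= up_eq exprS mulN1r !mulNr mul1r; congr (- (_ * _)).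
  by apply: eq_bigr => j /andP [_ ji]; rewrite up_ne.
rewrite mul1r; apply: eq_bigr => j jX; rewrite up_ne //.
by apply: contraNneq iX => <-.
Qed.
Lemma rho_down X i b : (0 < b i)%N -> rho X (shift_down i b) = sgn X i * rho X b.
Proof.
move=> hb; rewrite -{2}(up_down hb) rho_up mulrA.
by rewrite /sgn; case: (i \in X); rewrite ?mulr1 ?mulN1r ?opprK ?mul1r.
Qed.
Lemma sgn_in X i : i \in X -> sgn X i = -1. Proof. by rewrite /sgn => ->. Qed.
Lemma sgn_out X i : i \notin X -> sgn X i = 1. Proof. by rewrite /sgn => /negbTE ->. Qed.

Lemma amRM X i : i \in X -> am (Rr X) (Mx i).
Proof.
move=> iX; apply: aop_ext => f b /=; rewrite reflAE /mulx.
case: ifP => hb; last by rewrite scaler0 oppr0.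
by rewrite reflAE rho_down // sgn_in // mulN1r scaleNr opprK.
Qed.
Lemma cmRM X i : i \notin X -> cm (Rr X) (Mx i).
Proof.
move=> iX; apply: aop_ext => f b /=; rewrite reflAE /mulx.
case: ifP => hb; last by rewrite scaler0.
by rewrite reflAE rho_down // sgn_out // mul1r.
Qed.
Lemma amRD X i : i \in X -> am (Rr X) (Dk i).
Proof.
move=> iX; apply: aop_ext => f b /=; rewrite reflAE !dunklE reflAE rho_up sgn_in //.
by rewrite !scalerA mulN1r mulrN scaleNr opprK mulrC.
Qed.
Lemma cmRD X i : i \notin X -> cm (Rr X) (Dk i).
Proof.
move=> iX; apply: aop_ext => f b /=; rewrite reflAE !dunklE reflAE rho_up sgn_out //.
by rewrite !scalerA mul1r mulrC.
Qed.
Lemma cmRE X i : cm (Rr X) (Ec i).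
Proof. by apply: aop_ext => f b /=; rewrite /cl !reflAE eZ. Qed.
Lemma RRsq X : Rr X * Rr X = 1.
Proof.
apply: aop_ext => f b /=; rewrite !reflAE scalerA /rho -big_split /=.
by rewrite big1 ?scale1r // => j _; rewrite -expr2 sqrr_sign.
Qed.
Lemma cmRR X Y : cm (Rr X) (Rr Y).
Proof. by apply: aop_ext => f b /=; rewrite !reflAE !scalerA mulrC. Qed.
Lemma RU X Y : [disjoint X & Y] -> Rr (X :|: Y) = Rr X * Rr Y.
Proof.
by move=> d; apply: aop_ext => f b /=; rewrite !reflAE scalerA /rho big_disjU.
Qed.
End Conc.

Section Blk.
Variable Rg : pzRingType.
Implicit Types (y z E M D A B m a b c d : Rg).

Lemma am0 y : am y 0. Proof. by rewrite /am mulr0 mul0r oppr0. Qed.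
Lemma cm0 y : cm y 0. Proof. by rewrite /cm mulr0 mul0r. Qed.

Lemma am_sumr (I : Type) (r : seq I) (P : pred I) (F : I -> Rg) y :
  (forall i, P i -> am y (F i)) -> am y (\sum_(i <- r | P i) F i).
Proof. by move=> H; apply: (big_ind (am y)) => //; [exact: am0 | exact: amD]. Qed.
Lemma cm_sumr (I : Type) (r : seq I) (P : pred I) (F : I -> Rg) y :
  (forall i, P i -> cm y (F i)) -> cm y (\sum_(i <- r | P i) F i).
Proof. by move=> H; apply: (big_ind (cm y)) => //; [exact: cm0 | exact: cmD]. Qed.
Lemma am_sums (I : Type) (r1 r2 : seq I) (P Q : pred I) (F G : I -> Rg) :
  (forall i j, P i -> Q j -> am (F i) (G j)) ->
  am (\sum_(i <- r1 | P i) F i) (\sum_(j <- r2 | Q j) G j).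
Proof.
move=> H; apply: (big_ind (fun u => am u _)).
- by apply/amS/am0.
- by move=> u v hu hv; apply: amDl.
by move=> i Pi; apply: am_sumr => j Qj; apply: H.
Qed.
Lemma cm_suml (I : Type) (r : seq I) (P : pred I) (F : I -> Rg) y :
  (forall i, P i -> cm (F i) y) -> cm (\sum_(i <- r | P i) F i) y.
Proof. by move=> H; apply/cmS/cm_sumr => i Pi; apply/cmS/H. Qed.
Lemma am_suml (I : Type) (r : seq I) (P : pred I) (F : I -> Rg) y :
  (forall i, P i -> am (F i) y) -> am (\sum_(i <- r | P i) F i) y.
Proof. by move=> H; apply/amS/am_sumr => i Pi; apply/amS/H. Qed.

Lemma subM3 m a b c d : a * b * c = d -> m * a * b * c = m * d.
Proof. by move=> H; rewrite -H !mulrA. Qed.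

Lemma amEP E1 E2 A B : am E1 E2 -> cm A E2 -> cm B E1 -> cm A B -> am (E1 * A) (E2 * B).
Proof.
move=> h12 hA hB hAB; rewrite /am !mulrA (swC _ hA) (swC _ hB).
by rewrite (amS h12) mulNr !mulNr (swC _ (cmS hAB)) opprK.
Qed.

Lemma osp1 E M D : E * E = -1 -> cm M E -> cm D E -> D*M*M - M*M*D = M + M ->
  (E*M)*(E*M)*(E*D) - (E*D)*(E*M)*(E*M) = E*M + E*M.
Proof.
move=> EE hM hD H.
have H' : D*M*M = M*M*D + (M + M) by rewrite -H addrC subrK.
rewrite !mulrA.
do 4 rewrite ?(swC _ hM) ?(swC _ hD).
rewrite EE !mulN1r !mulNr (subM3 _ H').
expand; lin.
Qed.
Lemma osp2 E M D : E * E = -1 -> cm M E -> cm D E -> D*D*M - M*D*D = D + D ->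
  (E*M)*(E*D)*(E*D) - (E*D)*(E*D)*(E*M) = E*D + E*D.
Proof.
move=> EE hM hD H.
have H' : D*D*M = M*D*D + (D + D) by rewrite -H addrC subrK.
rewrite !mulrA.
do 4 rewrite ?(swC _ hM) ?(swC _ hD).
rewrite EE !mulN1r !mulNr (subM3 _ H').
expand; lin.
Qed.

Section Sq.
Variable I : eqType.
Variable F : I -> Rg.
Lemma sq_seq (s : seq I) : uniq s ->
  (forall i j, i \in s -> j \in s -> i != j -> am (F i) (F j)) ->
  (\sum_(i <- s) F i) * (\sum_(i <- s) F i) = \sum_(i <- s) F i * F i.
Proof.
elim: s => [|a s IH] /=; first by rewrite !big_nil mul0r.
case/andP=> as_ us H; rewrite !big_cons.
have ha : am (F a) (\sum_(i <- s) F i).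
  rewrite big_seq_cond; apply: am_sumr => j /andP [js _].
  by apply: H; rewrite ?inE ?eqxx ?js ?orbT //; apply: contraNneq as_ => ->.
have IH' : (\sum_(i <- s) F i) * (\sum_(i <- s) F i) = \sum_(i <- s) F i * F i.
  by apply: IH => // i j is_ js ij; apply: H; rewrite // inE ?is_ ?js orbT.
rewrite mulrDl !mulrDr IH' ha; lin.
Qed.

End Sq.

Section Seq.
Variable I : eqType.
Variables F G : I -> Rg.

Lemma osp_seq (s : seq I) : uniq s ->
  (forall i j, i \in s -> j \in s -> i != j -> am (F i) (F j)) ->
  (forall i j, i \in s -> j \in s -> i != j -> am (F i) (G j)) ->
  (forall i, i \in s -> F i * F i * G i - G i * F i * F i = F i + F i) ->
  let x := \sum_(i <- s) F i in let d := \sum_(i <- s) G i in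
  x * x * d - d * x * x = x + x.
Proof.
move=> us HF HFG Ho x d.
rewrite /x -[d * _ * _]mulrA sq_seq // mulr_suml mulr_sumr -sumrB.
rewrite -big_split /= big_seq [in RHS]big_seq; apply: eq_bigr => i is_.
rewrite /d mulr_sumr mulr_suml -sumrB (bigD1_seq i) //= mulrA Ho //.
rewrite big_seq_cond big1 ?addr0 // => j /andP [js ji].
rewrite -mulrA; apply/eqP; rewrite subr_eq0; apply/eqP.
have hij : am (F i) (G j) by apply: HFG => //; rewrite eq_sym.
by rewrite mulrA; apply: cmMla.
Qed.

Lemma osp_seq2 (s : seq I) : uniq s ->
  (forall i j, i \in s -> j \in s -> i != j -> am (G i) (G j)) ->
  (forall i j, i \in s -> j \in s -> i != j -> am (F i) (G j)) ->
  (forall i, i \in s -> F i * G i * G i - G i * G i * F i = G i + G i) ->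
  let x := \sum_(i <- s) F i in let d := \sum_(i <- s) G i in
  x * d * d - d * d * x = d + d.
Proof.
move=> us HG HFG Ho x d.
rewrite -mulrA /d (@sq_seq _ G) // mulr_suml mulr_sumr -sumrB.
rewrite -big_split /= big_seq [in RHS]big_seq; apply: eq_bigr => i is_.
rewrite /x mulr_sumr mulr_suml -sumrB (bigD1_seq i) //= mulrA Ho //.
rewrite big_seq_cond big1 ?addr0 // => j /andP [js ji].
apply/eqP; rewrite subr_eq0; apply/eqP.
have hij : am (G i) (F j) by apply/amS/HFG => //.
by apply: cmS; apply: cmMla.
Qed.
End Seq.
End Blk.

Section Fin.
Variables (R : realFieldType) (n : nat) (V : lmodType R) (mu : 'I_n -> R) (e : 'I_n -> V -> V).
Hypothesis he_lin : forall i (a : R) (u v : V), e i (a *: u + v) = a *: e i u + e i v.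
Hypothesis he_cl : forall i j (v : V), e i (e j v) + e j (e i v) = - ((2 * (i == j)%:R) *: v).
Local Notation Op := (@aop R n V).
Implicit Types (i j : 'I_n) (X Y : {set 'I_n}).

Local Notation Ec := (Ec he_lin).
Local Notation Mx := (@Mx R n V).
Local Notation Dk := (@Dk R n V mu).
Local Notation Rr := (@Rr R n V).
Local Notation hop := (@hop R n V).

Definition Xi i : Op := Ec i * Mx i.
Definition Ti i : Op := Ec i * Dk i.
Definition xop X : Op := \sum_(i in X) Xi i.
Definition Dop X : Op := \sum_(i in X) Ti i.
Definition Gop X : Op := Sf hop (xop X) (Dop X) * Rr X.

Lemma amXX i j : i != j -> am (Xi i) (Xi j).
Proof. by move=> ij; apply: amEP; [exact: amEE|apply/cmS/cmEM|apply/cmS/cmEM|exact: cmMM]. Qed.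
Lemma amXT i j : i != j -> am (Xi i) (Ti j).
Proof. by move=> ij; apply: amEP; [exact: amEE|apply/cmS/cmEM|apply/cmS/cmED|exact: cmMD]. Qed.
Lemma amTT i j : i != j -> am (Ti i) (Ti j).
Proof. by move=> ij; apply: amEP; [exact: amEE|apply/cmS/cmED|apply/cmS/cmED|exact: cmDD]. Qed.
Lemma ospX i : Xi i * Xi i * Ti i - Ti i * Xi i * Xi i = Xi i + Xi i.
Proof. by apply: osp1; [exact: EEsq|apply/cmS/cmEM|apply/cmS/cmED|exact: oMx]. Qed.
Lemma ospT i : Xi i * Ti i * Ti i - Ti i * Ti i * Xi i = Ti i + Ti i.
Proof. by apply: osp2; [exact: EEsq|apply/cmS/cmEM|apply/cmS/cmED|exact: oDk]. Qed.

Lemma dne X Y i j : [disjoint X & Y] -> i \in X -> j \in Y -> i != j.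
Proof. by move=> d iX jY; apply/eqP => ij; move: (disjointFr d iX); rewrite ij jY. Qed.

Lemma box X : xop X * xop X * Dop X - Dop X * xop X * xop X = xop X + xop X.
Proof.
rewrite /xop /Dop -!big_enum.
apply: (osp_seq (F:=Xi) (G:=Ti)); first exact: enum_uniq.
- by move=> i j _ _; apply: amXX.
- by move=> i j _ _; apply: amXT.
- by move=> i _; apply: ospX.
Qed.
Lemma bod X : xop X * Dop X * Dop X - Dop X * Dop X * xop X = Dop X + Dop X.
Proof.
rewrite /xop /Dop -!big_enum.
apply: (osp_seq2 (F:=Xi) (G:=Ti)); first exact: enum_uniq.
- by move=> i j _ _; apply: amTT.
- by move=> i j _ _; apply: amXT.
- by move=> i _; apply: ospT.
Qed.
Lemma bxx X Y : [disjoint X & Y] -> am (xop X) (xop Y).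
Proof. by move=> d; apply: am_sums => i j iX jY; apply/amXX/(dne d). Qed.
Lemma bdd X Y : [disjoint X & Y] -> am (Dop X) (Dop Y).
Proof. by move=> d; apply: am_sums => i j iX jY; apply/amTT/(dne d). Qed.
Lemma bxd X Y : [disjoint X & Y] -> am (xop X) (Dop Y).
Proof. by move=> d; apply: am_sums => i j iX jY; apply/amXT/(dne d). Qed.
Lemma bRx X : am (Rr X) (xop X).
Proof. by apply: am_sumr => i iX; apply: amM2; [exact: cmRE|exact: amRM]. Qed.
Lemma bRd X : am (Rr X) (Dop X).
Proof. by apply: am_sumr => i iX; apply: amM2; [exact: cmRE|exact: amRD]. Qed.
Lemma bRcx X Y : [disjoint X & Y] -> cm (Rr X) (xop Y).
Proof.
move=> d; apply: cm_sumr => i iY; apply: cmM; first exact: cmRE.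
by apply: cmRM; rewrite (disjointFl d iY).
Qed.
Lemma bRcd X Y : [disjoint X & Y] -> cm (Rr X) (Dop Y).
Proof.
move=> d; apply: cm_sumr => i iY; apply: cmM; first exact: cmRE.
by apply: cmRD; rewrite (disjointFl d iY).
Qed.
Lemma xopU X Y : [disjoint X & Y] -> xop (X :|: Y) = xop X + xop Y.
Proof. by move=> d; rewrite /xop big_disjU. Qed.
Lemma DopU X Y : [disjoint X & Y] -> Dop (X :|: Y) = Dop X + Dop Y.
Proof. by move=> d; rewrite /Dop big_disjU. Qed.
Lemma GopU X Y : [disjoint X & Y] ->
  Gop (X :|: Y) = Sf hop (xop X + xop Y) (Dop X + Dop Y) * (Rr X * Rr Y).
Proof. by move=> d; rewrite /Gop xopU // DopU // RU. Qed.

Lemma app_sum (I : finType) (P : pred I) (F : I -> Op) f b :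
  (\sum_(i | P i) F i) f b = \sum_(i | P i) F i f b.
Proof.
apply: (big_morph (fun a : Op => a f b)) => //.
Qed.

Lemma xopE X g : xop X g = xA e X g.
Proof.
apply: functional_extensionality => b; rewrite /xop app_sum /xA.
by apply: eq_bigr.
Qed.
Lemma DopE X g : Dop X g = DA mu e X g.
Proof.
apply: functional_extensionality => b; rewrite /Dop app_sum /DA.
by apply: eq_bigr.
Qed.
Lemma GopE X g : Gamma mu e X g = Gop X g.
Proof.
apply: functional_extensionality => b.
rewrite /Gamma /Gop /SA /Sf mulE /=.
by rewrite /pscale /psub !xopE !DopE.
Qed.
End Fin.



Unset Implicit Arguments.
Theorem proposition4 (R : realFieldType) (n : nat) (V : lmodType R)
  (mu : 'I_n -> R) (e : 'I_n -> V -> V)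
  (hn : (0 < n)%N)
  (hmu : forall i, 0 < mu i)
  (he_lin : forall i (a : R) (u v : V), e i (a *: u + v) = a *: e i u + e i v)
  (he_cl : forall i j (v : V), e i (e j v) + e j (e i v) = - ((2 * (i == j)%:R) *: v))
  (A B : {set 'I_n}) (f : PV n V) (hf : finsupp f) :
  padd (Gamma mu e A (Gamma mu e B f)) (Gamma mu e B (Gamma mu e A f)) =
  padd (Gamma mu e ((A :|: B) :\: (A :&: B)) f)
    (padd (pscale 2%:R (Gamma mu e (A :&: B) (Gamma mu e (A :|: B) f)))
          (pscale 2%:R (Gamma mu e (A :\: (A :&: B)) (Gamma mu e (B :\: (A :&: B)) f)))).
Proof.
rewrite !(GopE mu he_lin).
set C := A :&: B; set P := A :\: C; set Q := B :\: C.
have eA : A = P :|: C by apply/setP => i; rewrite /P /C !inE; case: (i \in A); case: (i \in B).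
have eB : B = C :|: Q by apply/setP => i; rewrite /Q /C !inE; case: (i \in A); case: (i \in B).
have eU : A :|: B = P :|: C :|: Q by apply/setP => i; rewrite /P /Q /C !inE; case: (i \in A); case: (i \in B).
have eS : (A :|: B) :\: C = P :|: Q by apply/setP => i; rewrite /P /Q /C !inE; case: (i \in A); case: (i \in B).
have dPC : [disjoint P & C].
  by rewrite -setI_eq0; apply/eqP/setP => i; rewrite /P /Q /C !inE; case: (i \in A); case: (i \in B).
have dCQ : [disjoint C & Q].
  by rewrite -setI_eq0; apply/eqP/setP => i; rewrite /P /Q /C !inE; case: (i \in A); case: (i \in B).
have dPQ : [disjoint P & Q].
  by rewrite -setI_eq0; apply/eqP/setP => i; rewrite /P /Q /C !inE; case: (i \in A); case: (i \in B).
have dPCQ : [disjoint P :|: C & Q].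
  by rewrite -setI_eq0; apply/eqP/setP => i; rewrite /P /Q /C !inE; case: (i \in A); case: (i \in B).
have dCP : [disjoint C & P] by rewrite disjoint_sym.
have dQC : [disjoint Q & C] by rewrite disjoint_sym.
have dQP : [disjoint Q & P] by rewrite disjoint_sym.
have K := main_abs (@hopC R n V) (@hophop R n V) (RRsq V C) (cmRR V P C) (cmRR V P Q) (cmRR V C Q)
  (bRx he_lin P) (bRd mu he_lin P) (bRx he_lin C) (bRd mu he_lin C) (bRx he_lin Q) (bRd mu he_lin Q)
  (bRcx he_lin dPC) (bRcd mu he_lin dPC) (bRcx he_lin dPQ) (bRcd mu he_lin dPQ)
  (bRcx he_lin dCP) (bRcd mu he_lin dCP) (bRcx he_lin dCQ) (bRcd mu he_lin dCQ)
  (bRcx he_lin dQP) (bRcd mu he_lin dQP) (bRcx he_lin dQC) (bRcd mu he_lin dQC)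
  (bxx he_lin he_cl dPC) (bxx he_lin he_cl dPQ) (bxx he_lin he_cl dCQ)
  (bdd mu he_lin he_cl dPC) (bdd mu he_lin he_cl dPQ) (bdd mu he_lin he_cl dCQ)
  (bxd mu he_lin he_cl dPC) (bxd mu he_lin he_cl dPQ) (bxd mu he_lin he_cl dCP)
  (bxd mu he_lin he_cl dCQ) (bxd mu he_lin he_cl dQP) (bxd mu he_lin he_cl dQC)
  (box mu he_lin he_cl P) (bod mu he_lin he_cl P) (box mu he_lin he_cl C) (bod mu he_lin he_cl C)
  (box mu he_lin he_cl Q) (bod mu he_lin he_cl Q).
rewrite -(GopU mu he_lin dPC) -(GopU mu he_lin dCQ) -(GopU mu he_lin dPQ) in K.
rewrite -(xopU he_lin dPC) -(DopU mu he_lin dPC) -(RU V dPC) -(GopU mu he_lin dPCQ) in K.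
have eAQ : A :|: B = A :|: Q by apply/setP => i; rewrite /Q /C !inE; case: (i \in A); case: (i \in B).
rewrite -eA -eB -eS -eAQ in K.
rewrite -/(Gop mu he_lin C) -/(Gop mu he_lin P) -/(Gop mu he_lin Q) in K.
rewrite !mulr_natl !mulr2n in K.
rewrite [LHS](_ : _ = (Gop mu he_lin A * Gop mu he_lin B + Gop mu he_lin B * Gop mu he_lin A) f) //.
rewrite K; apply: functional_extensionality => b.
by rewrite /padd /pscale !scaler_nat !mulr2n !addE -addrA.
Qed.
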